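(* Let $V$ be a reflexive Banach space, $X$ a Banach space, $\gamma\in\mathcal{L}(V,X)$ with $c_\gamma:=\|\gamma\|_{\mathcal{L}(V,X)}$ and adjoint $\gamma^*\colon X^*\to V^*$. Let $A\colon V\to V^*$, $J\colon X\times X\to\mathbb{R}$ and $f\in V^*$ satisfy: (A1) $A$ is linear and bounded; (A2) $\langle Au,v\rangle_{V^*\times V}=\langle Av,u\rangle_{V^*\times V}$ for all $u,v\in V$; (A3) there is $m_A>0$ with $\langle Au,u\rangle_{V^*\times V}\ge m_A\|u\|_V^2$ for all $u\in V$; (J1) $J$ is locally Lipschitz continuous with respect to its second variable; (J2) there exist $c_0,c_1,c_2\ge 0$ with $\|\partial_2 J(w,v)\|_{X^*}\le c_0+c_1\|v\|_X+c_2\|w\|_X$ for all $w,v\in X$; (J3) there exist $m_\alpha,m_L\ge0$ such that $J_2^0(w_1,v_1;v_2-v_1)+J_2^0(w_2,v_2;v_1-v_2)\le m_\alpha\|v_1-v_2\|_X^2+m_L\|w_1-w_2\|_X\|v_1-v_2\|_X$ for all $w_1,w_2,v_1,v_2\in X$; (S) $m_A>(m_\alpha+m_L)c_\gamma^2$. Define $\mathcal{L}\colon V\times V\to\mathbb{R}$ by $\mathcal{L}(w,v)=\tfrac12\langle Av,v\rangle_{V^*\times V}-\langle f,v\rangle_{V^*\times V}+J(\gamma w,\gamma v)$. Then: (i) $\mathcal{L}(w,\cdot)$ is locally Lipschitz continuous for all $w\in V$; (ii) $\partial_2\mathcal{L}(w,v)\subseteq Av-f+\gamma^*\partial_2J(\gamma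 w,\gamma v)$ for all $w,v\in V$; (iii) $\mathcal{L}(w,\cdot)$ is strictly convex for all $w\in V$.
   Context: For a locally Lipschitz function $g$ on a Banach space $Y$, the generalized (Clarke) directional derivative at $x$ in direction $v$ is $g^0(x;v)=\limsup_{y\to x,\lambda\searrow0}\frac{g(y+\lambda v)-g(y)}{\lambda}$, and the Clarke subdifferential is $\partial g(x)=\{\xi\in Y^*:\langle\xi,v\rangle\le g^0(x;v)\ \forall v\in Y\}$. For a function of two variables, $\partial_2$ and $(\cdot)_2^0$ denote the Clarke subdifferential and generalized directional derivative with respect to the second variable. $\|\partial_2J(w,v)\|_{X^*}$ denotes $\sup\{\|\xi\|_{X^*}:\xi\in\partial_2J(w,v)\}$. *)

(* Defs.v *)
From HB Require Import structures.
From mathcomp Require Import all_boot all_order all_algebra.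
From mathcomp Require Import all_classical all_reals all_analysis.
Set Implicit Arguments. Unset Strict Implicit. Unset Printing Implicit Defensive.
Import Order.TTheory GRing.Theory Num.Theory.
Import numFieldNormedType.Exports.
Local Open Scope classical_set_scope.
Local Open Scope ring_scope.

Section Defs.
Context {R : realType}.

Definition is_linear (Y Z : normedModType R) (g : Y -> Z) :=
  forall (a : R) (x y : Y), g (a *: x + y) = a *: g x + g y.

Definition dual_elt (Y : normedModType R) (xi : Y -> R) :=
  (forall (a : R) (x y : Y), xi (a *: x + y) = a * xi x + xi y) /\ continuous xi.

Definition dual_norm (Y : normedModType R) (xi : Y -> R) : R :=
  sup [set `|xi v| | v in [set v : Y | `|v| <= 1]].

Definition op_norm (Y Z : normedModType R) (g : Y -> Z) : R :=
  sup [set `|g v| | v in [set v : Y | `|v| <= 1]].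

(* reflexivity: every bounded linear functional on Y^* is an evaluation
   functional xi |-> xi v, i.e. the canonical embedding Y -> Y^** is onto *)
Definition reflexive_space (Y : normedModType R) :=
  forall Phi : (Y -> R) -> R,
    (forall (a : R) (xi1 xi2 : Y -> R), dual_elt xi1 -> dual_elt xi2 ->
       Phi (fun y => a * xi1 y + xi2 y) = a * Phi xi1 + Phi xi2) ->
    (exists C : R, forall xi, dual_elt xi -> `|Phi xi| <= C * dual_norm xi) ->
    exists v : Y, forall xi, dual_elt xi -> Phi xi = xi v.

Definition loc_lipschitz (Y : normedModType R) (g : Y -> R) :=
  forall x : Y, exists2 r : R, 0 < r & exists L : R,
    forall y z : Y, `|y - x| < r -> `|z - x| < r -> `|g y - g z| <= L * `|y - z|.

(* Clarke generalized directional derivative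
   g^0(x;v) = limsup_{y -> x, lambda \searrow 0} (g(y + lambda v) - g y)/lambda
            = inf_{delta > 0} sup_{||y - x|| < delta, 0 < lambda < delta} ... *)
Definition clarke_dd (Y : normedModType R) (g : Y -> R) (x v : Y) : \bar R :=
  ereal_inf [set ereal_sup
     [set ((g (yl.1 + yl.2 *: v) - g yl.1) / yl.2)%:E
       | yl in [set yl : Y * R | `|yl.1 - x| < delta /\ 0 < yl.2 < delta]]
     | delta in [set d : R | 0 < d]].

Definition clarke_subdiff (Y : normedModType R) (g : Y -> R) (x : Y) : set (Y -> R) :=
  [set xi | dual_elt xi /\ forall v : Y, ((xi v)%:E <= clarke_dd g x v)%E].

Definition strictly_convex (Y : normedModType R) (g : Y -> R) :=
  forall (u v : Y) (t : R), u <> v -> 0 < t < 1 ->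
    g (t *: u + (1 - t) *: v) < t * g u + (1 - t) * g v.

Definition Lag_fun (V X : normedModType R) (A : V -> V -> R) (f : V -> R)
  (gamma : V -> X) (J : X -> X -> R) (w v : V) : R :=
  2^-1 * A v v - f v + J (gamma w) (gamma v).

End Defs.

(* Main.v *)
Require Import Defs.
From HB Require Import structures.
From mathcomp Require Import all_boot all_order all_algebra.
From mathcomp Require Import all_classical all_reals all_analysis.
Import Order.TTheory GRing.Theory Num.Theory.
Import numFieldNormedType.Exports.
From mathcomp Require Import ring lra.
Import Num.Def.
Local Open Scope classical_set_scope.
Local Open Scope ring_scope.
Set Implicit Arguments. Unset Strict Implicit.
Section Main.
Variable R : realType.
Implicit Types Y Z : normedModType R.
Lemma addKB {Z : zmodType} (v a b : Z) : v + a - (v + b) = a - b.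
Proof. by rewrite opprD addrACA subrr add0r. Qed.

Lemma lin0 {Y Z} (g : Y -> Z) : is_linear g -> g 0 = 0.
Proof.
move=> h; have := h 1 0 0; rewrite !scale1r addr0.
by move/(congr1 (fun t => t - g 0)); rewrite subrr addrK.
Qed.

Lemma linD {Y Z} (g : Y -> Z) : is_linear g -> forall x y, g (x + y) = g x + g y.
Proof. by move=> h x y; rewrite -{1}(scale1r x) h scale1r. Qed.

Lemma linZ {Y Z} (g : Y -> Z) : is_linear g -> forall a x, g (a *: x) = a *: g x.
Proof. by move=> h a x; rewrite -(addr0 (a *: x)) h lin0 // addr0. Qed.

Lemma linN {Y Z} (g : Y -> Z) : is_linear g -> forall x, g (- x) = - g x.
Proof. by move=> h x; rewrite -scaleN1r linZ // scaleN1r. Qed.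

Lemma linB {Y Z} (g : Y -> Z) : is_linear g -> forall x y, g (x - y) = g x - g y.
Proof. by move=> h x y; rewrite linD // linN. Qed.

Lemma dual_lin {Y} (xi : Y -> R) : dual_elt xi -> is_linear (xi : Y -> R^o).
Proof. by case=> h _ a x y; rewrite h. Qed.

Lemma lin_bounded {Y Z} (g : Y -> Z) : is_linear g -> continuous g ->
  exists2 B, 0 < B & forall v, `|g v| <= B * `|v|.
Proof.
move=> h cg.
have := cg 0 => /cvgrPdist_lt /(_ 1 ltr01) /nbhs_normP [e e0 /= he].
exists (2 / e); first by rewrite divr_gt0.
move=> v; have [->|v0] := eqVneq v 0.
  by rewrite lin0 // !normr0 mulr0.
have nv : 0 < `|v| by rewrite normr_gt0.
set c := e / (2 * `|v|).
have c0 : 0 < c by rewrite divr_gt0 // mulr_gt0.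
have : `|0 - c *: v| < e.
  rewrite sub0r normrN normrZ gtr0_norm // /c.
  have -> : e / (2 * `|v|) * `|v| = e / 2 by field; rewrite gt_eqF.
  by rewrite ltr_pdivrMr // ltr_pMr // ltr1n.
move/he; rewrite lin0 // sub0r normrN linZ // normrZ gtr0_norm // /c => H.
have H2 : `|g v| < (2 * `|v|) / e.
  have -> : `|g v| = (e / (2 * `|v|) * `|g v|) * ((2 * `|v|) / e) by field; rewrite !gt_eqF // mulr_gt0.
  by rewrite gtr_pMl // divr_gt0 // mulr_gt0.
by rewrite mulrAC; apply: ltW.
Qed.

Lemma op_norm_has_ub {Y Z} (g : Y -> Z) : is_linear g -> continuous g ->
  has_ubound [set `|g v| | v in [set v : Y | `|v| <= 1]].
Proof.
move=> h cg; have [B B0 hB] := lin_bounded h cg.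
exists B => _ [v /= v1 <-]; apply: (le_trans (hB v)).
by rewrite -[X in _ <= X]mulr1 ler_wpM2l // ltW.
Qed.

Lemma op_norm_ge0 {Y Z} (g : Y -> Z) : is_linear g -> continuous g -> 0 <= op_norm g.
Proof.
move=> h cg; apply: (le_trans _ (ub_le_sup (op_norm_has_ub h cg) _)); last first.
  by exists 0 => //=; rewrite normr0.
by rewrite lin0 // normr0.
Qed.

Lemma op_normP {Y Z} (g : Y -> Z) : is_linear g -> continuous g ->
  forall v, `|g v| <= op_norm g * `|v|.
Proof.
move=> h cg v; have [->|v0] := eqVneq v 0.
  by rewrite lin0 // !normr0 mulr0.
have nv : 0 < `|v| by rewrite normr_gt0.
have H : `|g (`|v|^-1 *: v)| <= op_norm g.
  apply: (ub_le_sup (op_norm_has_ub h cg)); exists (`|v|^-1 *: v) => //=.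
  by rewrite normrZ normfV normr_id mulVf // gt_eqF.
move: H; rewrite linZ // normrZ normfV normr_id => H.
rewrite mulrC -ler_pdivrMl //; by rewrite mulrC.
Qed.

Lemma dual_normP {Y} (xi : Y -> R) : dual_elt xi ->
  forall v, `|xi v| <= dual_norm xi * `|v|.
Proof.
move=> hx; have := @op_normP Y R^o xi (dual_lin hx) (proj2 hx); exact.
Qed.

Lemma dual_bounded {Y} (xi : Y -> R) : dual_elt xi ->
  exists2 B, 0 < B & forall v, `|xi v| <= B * `|v|.
Proof. move=> hx; exact: (@lin_bounded Y R^o xi (dual_lin hx) (proj2 hx)). Qed.

Definition dq {Y} (g : Y -> R) (y v : Y) (l : R) := (g (y + l *: v) - g y) / l.

Lemma clarke_le {Y} (g : Y -> R) x v (B : R) :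
  (forall e, 0 < e -> exists2 d, 0 < d & forall y l, `|y - x| < d -> 0 < l < d ->
      dq g y v l <= B + e) -> (clarke_dd g x v <= B%:E)%E.
Proof.
move=> H; apply/lee_addgt0Pr => e e0; have [d d0 Hd] := H e e0.
apply: (le_trans (ereal_inf_lbound _)); first by exists d.
apply: ge_ereal_sup => _ [[y l] /= [yx ld] <-].
by rewrite lee_fin; exact: Hd.
Qed.

Lemma clarke_ge {Y} (g : Y -> R) x v (B : R) :
  (forall d, 0 < d -> exists y l, `|y - x| < d /\ 0 < l < d /\ B <= dq g y v l) ->
  (B%:E <= clarke_dd g x v)%E.
Proof.
move=> H; apply: le_ereal_inf_tmp => _ [d d0 <-].
have [y [l [yx [ld Bq]]]] := H d d0.
apply: le_ereal_sup_tmp; exists (dq g y v l)%:E; last by rewrite lee_fin.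
by exists (y, l).
Qed.

Lemma clarke_near {Y} (g : Y -> R) x v (B : R) :
  (clarke_dd g x v <= B%:E)%E -> forall e, 0 < e ->
  exists2 d, 0 < d & forall y l, `|y - x| < d -> 0 < l < d -> dq g y v l < B + e.
Proof.
move=> H e e0.
have : (clarke_dd g x v < (B + e)%:E)%E.
  by apply: (le_lt_trans H); rewrite lte_fin ltrDl.
case/ereal_inf_lt => _ [d d0 <-] Hs; exists d => // y l yx ld.
rewrite -lte_fin; apply: le_lt_trans Hs; apply: ereal_sup_ubound.
by exists (y, l).
Qed.
Lemma dq_lip {Y} (g : Y -> R) x : loc_lipschitz g ->
  exists2 L, 0 <= L & forall v, exists2 d0, 0 < d0 & forall y l,
     `|y - x| < d0 -> 0 < l < d0 -> `|dq g y v l| <= L * `|v|.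
Proof.
move=> /(_ x) [r r0 [L0 HL]]; exists `|L0| => // v.
have v0 : 0 <= `|v| by [].
set d0 := r / (2 * (`|v| + 1)).
have d00 : 0 < d0 by rewrite divr_gt0 // mulr_gt0 // ltr_wpDl.
have d0r : d0 * (`|v| + 1) = r / 2 by rewrite /d0; field; rewrite gt_eqF // ltr_wpDl.
exists d0 => // y l yx /andP[l0 ld].
have yr : `|y - x| < r by nra.
have ylr : `|y + l *: v - x| < r.
  have -> : y + l *: v - x = (y - x) + l *: v by rewrite addrAC.
  apply: (le_lt_trans (ler_normD _ _)); rewrite normrZ gtr0_norm //; nra.
have := HL _ _ ylr yr.
rewrite addrAC subrr add0r normrZ gtr0_norm // => H.
rewrite /dq normrM normfV (gtr0_norm l0) ler_pdivrMr //.
apply: (le_trans H); rewrite -mulrA [`|v| * l]mulrC.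
by apply: ler_wpM2r; [rewrite mulr_ge0 // ltW | exact: ler_norm].
Qed.

Lemma clarke_fin {Y} (g : Y -> R) x : loc_lipschitz g ->
  exists2 L, 0 <= L & forall v,
    ((- (L * `|v|))%:E <= clarke_dd g x v)%E /\ (clarke_dd g x v <= (L * `|v|)%:E)%E.
Proof.
move=> /(dq_lip x) [L L0 HL]; exists L => // v; have [d0 d00 Hd] := HL v.
split.
  apply: clarke_ge => d dp; exists x, (minr d d0 / 2); split.
    by rewrite subrr normr0.
  have m0 : 0 < minr d d0 by rewrite lt_min dp d00.
  have m2 : 0 < minr d d0 / 2 by rewrite divr_gt0.
  have m3 : minr d d0 / 2 < minr d d0 by rewrite ltr_pdivrMr // ltr_pMr // ltr1n.
  split; first by rewrite m2 /= (lt_le_trans m3) // ge_min lexx.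
  have := Hd x (minr d d0 / 2); rewrite subrr normr0 => /(_ d00).
  rewrite m2 /= (lt_le_trans m3) ?ge_min ?lexx ?orbT // => /(_ isT).
  by rewrite ler_norml => /andP[].
apply: clarke_le => e e0; exists d0 => // y l yx ld.
have := Hd y l yx ld; rewrite ler_norml => /andP[_ H].
by apply: (le_trans H); rewrite lerDl ltW.
Qed.
Section HahnBanach.
Variable X : lmodType R.
Variable p : X -> R.
Hypothesis padd : forall x y, p (x + y) <= p x + p y.
Hypothesis phom : forall t x, 0 < t -> p (t *: x) = t * p x.

Definition PB (G : set (X * R)) :=
  [/\ G (0, 0),
      (forall a x r y s, G (x, r) -> G (y, s) -> G (a *: x + y, a * r + s)),
      (forall x r s, G (x, r) -> G (x, s) -> r = s) &
      (forall x r, G (x, r) -> r <= p x)].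

Lemma PB_scale G a x r : PB G -> G (x, r) -> G (a *: x, a * r).
Proof.
case=> G0 Gc _ _ Gx; have := Gc a x r 0 0 Gx G0.
by rewrite addr0 addr0.
Qed.

Lemma PB_sub G x r y s : PB G -> G (x, r) -> G (y, s) -> G (x - y, r - s).
Proof.
move=> hG Gx Gy; have := (let: And4 _ Gc _ _ := hG in Gc) (-1) y s x r Gy Gx.
by rewrite scaleN1r mulN1r addrC [- s + r]addrC.
Qed.

Lemma extend_step (M : set (X * R)) x0 : PB M -> ~ (exists r, M (x0, r)) ->
  exists M' : set (X * R), [/\ PB M', M `<=` M' & exists c, M' (x0, c)].
Proof.
move=> hM nx0; have [M0 Mc Mf Md] := hM.
pose Ls := [set z | exists y s, M (y, s) /\ z = s - p (y - x0)].
have key : forall y s y' s', M (y, s) -> M (y', s') ->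
    s - p (y - x0) <= p (y' + x0) - s'.
  move=> y s y' s' My My'.
  have := Md _ _ (Mc 1 y s y' s' My My'); rewrite scale1r mul1r => H.
  have := padd (y - x0) (y' + x0).
  have -> : y - x0 + (y' + x0) = y + y' by rewrite addrACA addNr addr0.
  move=> H2; lra.
have Lub : has_ubound Ls.
  exists (p (0 + x0) - 0) => _ [y [s [My ->]]]; exact: key.
have Ln : Ls !=set0 by exists (0 - p (0 - x0)), 0, 0.
set c := sup Ls.
have hc1 : forall y s, M (y, s) -> s - p (y - x0) <= c.
  by move=> y s My; apply: ub_le_sup => //; exists y, s.
have hc2 : forall y s, M (y, s) -> c <= p (y + x0) - s.
  move=> y s My; apply: ge_sup => // _ [y' [s' [My' ->]]]; exact: key.
pose M' := [set z | exists x r t, M (x, r) /\ z = (x + t *: x0, r + t * c)].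
exists M'; split.
- split.
  + by exists 0, 0, 0; split => //; rewrite scale0r mul0r !addr0.
  + move=> a x r y s [x1 [r1 [t1 [M1 [-> ->]]]]] [x2 [r2 [t2 [M2 [-> ->]]]]].
    exists (a *: x1 + x2), (a * r1 + r2), (a * t1 + t2); split; first exact: Mc.
    congr (_, _); last by ring.
    by rewrite !scalerDr scalerA scalerDl addrACA.
  + move=> x r s [x1 [r1 [t1 [M1 [-> ->]]]]] [x2 [r2 [t2 [M2 [e ->]]]]].
    have [t12|t12] := eqVneq t1 t2.
      move: e; rewrite t12 => /addIr e; rewrite e in M1.
      by rewrite (Mf _ _ _ M1 M2).
    exfalso; apply: nx0.
    have tn : t1 - t2 != 0 by rewrite subr_eq0.
    exists ((t1 - t2)^-1 * (r2 - r1)).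
    have -> : x0 = (t1 - t2)^-1 *: (x2 - x1).
      have e2 : (t1 - t2) *: x0 = x2 - x1.
        rewrite scalerBl -[x2](addrK (t2 *: x0)) -e.
        by rewrite [x1 + _]addrC addrAC addrK.
      by rewrite -e2 scalerA mulVf // scale1r.
    by apply: PB_scale => //; apply: PB_sub.
  + move=> x r [x1 [r1 [t [M1 [-> ->]]]]].
    have [t0|t0|->] := ltgtP t 0; last first.
    * by rewrite scale0r mul0r !addr0; exact: Md.
    * have H := hc2 _ _ (PB_scale t^-1 hM M1).
      have -> : x1 + t *: x0 = t *: (t^-1 *: x1 + x0).
        by rewrite scalerDr scalerA mulfV ?gt_eqF // scale1r.
      rewrite phom //.
      have tt : t * t^-1 = 1 by rewrite mulfV // gt_eqF.
      have := ler_wpM2l (ltW t0) H; rewrite mulrBr mulrA tt mul1r; lra.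
    * set u := - t.
      have u0 : 0 < u by rewrite /u oppr_gt0.
      have H := hc1 _ _ (PB_scale u^-1 hM M1).
      have -> : x1 + t *: x0 = u *: (u^-1 *: x1 - x0).
        by rewrite scalerDr scalerA mulfV ?gt_eqF // scale1r /u scalerN scaleNr opprK.
      rewrite phom //.
      have tt : u * u^-1 = 1 by rewrite mulfV // gt_eqF.
      have -> : t = - u by rewrite /u opprK.
      have := ler_wpM2l (ltW u0) H; rewrite mulrBr mulrA tt mul1r; lra.
- by move=> [x r] Mx; exists x, r, 0; split => //; rewrite scale0r mul0r !addr0.
- by exists c, 0, 0, 1; split => //; rewrite scale1r mul1r !add0r.
Qed.

Lemma hahn_banach (G0 : set (X * R)) : PB G0 ->
  exists eta : X -> R, [/\ (forall a x y, eta (a *: x + y) = a * eta x + eta y),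
     (forall x, eta x <= p x) & (forall x r, G0 (x, r) -> eta x = r)].
Proof.
move=> hG0.
pose Q (G : set (X * R)) := PB (G0 `|` G).
have [A [QA Amax]] : exists A, Q A /\ forall B, A `<` B -> ~ Q B.
  apply: Zorn_bigcup => F FQ Ftot.
  set U := G0 `|` \bigcup_(i in F) i.
  have two : forall a b, U a -> U b ->
      exists H, [/\ PB H, H `<=` U, H a & H b].
    have sub1 : forall i, F i -> G0 `|` i `<=` U.
      move=> i Fi z [?|?]; [by left | by right; exists i].
    move=> a b [Ga|[i Fi ia]] [Gb|[j Fj jb]].
    + by exists G0; split => // z Gz; left.
    + by exists (G0 `|` j); split => //; [exact: FQ | exact: sub1 | left | right].
    + by exists (G0 `|` i); split => //; [exact: FQ | exact: sub1 | right | left].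
    + have [ij|ji] := Ftot i j Fi Fj.
      * by exists (G0 `|` j); split => //; [exact: FQ | exact: sub1 | right; apply: ij | right].
      * by exists (G0 `|` i); split => //; [exact: FQ | exact: sub1 | right | right; apply: ji].
  have [G00 _ _ _] := hG0.
  split.
  + by left.
  + move=> a x r y s Ux Uy; have [H [[_ Hc _ _] HU Hx Hy]] := two _ _ Ux Uy.
    exact/HU/Hc.
  + move=> x r s Ux Uy; have [H [[_ _ Hf _] HU Hx Hy]] := two _ _ Ux Uy.
    exact: Hf Hx Hy.
  + move=> x r Ux; have [H [[_ _ _ Hd] HU Hx _]] := two _ _ Ux Ux.
    exact: Hd.
set M := G0 `|` A.
have hM : PB M by [].
have dom : forall x, exists r, M (x, r).
  move=> x; have [//|nx] := pselect (exists r, M (x, r)).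
  have [M' [hM' MM' [c Mc]]] := extend_step hM nx.
  exfalso; apply: (Amax M').
    split; first by move=> z Az; apply: MM'; right.
    move=> M'A; apply: nx; exists c; right; exact: M'A.
  rewrite /Q; have -> : G0 `|` M' = M'.
    apply/seteqP; split => z; last by move=> ?; right.
    by case=> // ?; apply: MM'; left.
  exact: hM'.
pose eta x := xget 0 [set r | M (x, r)].
have heta : forall x, M (x, eta x) by move=> x; exact: (@xgetPex _ 0 [set r | M (x, r)] (dom x)).
have [_ Mc Mf Md] := hM.
exists eta; split.
- by move=> a x y; apply: Mf (heta _) (Mc _ _ _ _ _ (heta x) (heta y)).
- by move=> x; apply: Md (heta x).
- by move=> x r Gx; apply: Mf (heta x) _; left.
Qed.
End HahnBanach.
Lemma clarke_add {Y} (g : Y -> R) x z1 z2 (P1 P2 : R) :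
  (clarke_dd g x z1 <= P1%:E)%E -> (clarke_dd g x z2 <= P2%:E)%E ->
  (clarke_dd g x (z1 + z2)%R <= (P1 + P2)%:E)%E.
Proof.
move=> H1 H2; apply: clarke_le => e e0.
have e2 : 0 < e / 2 by rewrite divr_gt0.
have [d1 d10 Hd1] := clarke_near H1 e2.
have [d2 d20 Hd2] := clarke_near H2 e2.
have z0 : 0 < `|z1| + 1 by rewrite ltr_wpDl.
set d := minr d1 (d2 / (`|z1| + 1)).
have d0 : 0 < d by rewrite lt_min d10 divr_gt0.
have h1 : d <= d1 by rewrite ge_min lexx.
have h2 : d <= d2 / (`|z1| + 1) by rewrite ge_min lexx orbT.
have h3 : d * (`|z1| + 1) <= d2 by rewrite -ler_pdivlMr.
exists d => // y l yx /andP[l0 ld].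
have -> : dq g y (z1 + z2) l = dq g (y + l *: z1) z2 l + dq g y z1 l.
  rewrite /dq scalerDr addrA; field; exact: lt0r_neq0.
have A1 := Hd1 y l (lt_le_trans yx h1) (introT andP (conj l0 (lt_le_trans ld h1))).
have A2 : dq g (y + l *: z1) z2 l < P2 + e / 2.
  apply: Hd2.
    have -> : y + l *: z1 - x = (y - x) + l *: z1 by rewrite addrAC.
    apply: (le_lt_trans (ler_normD _ _)); rewrite normrZ gtr0_norm //.
    have : 0 <= `|z1| by []. nra.
  rewrite l0 /=; have : 0 <= `|z1| by []. nra.
have -> : P1 + P2 + e = (P2 + e / 2) + (P1 + e / 2) by field.
by apply: ltW; apply: ltrD.
Qed.

Lemma clarke_hom {Y} (g : Y -> R) x z t (P : R) : 0 < t ->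
  (clarke_dd g x z <= P%:E)%E -> (clarke_dd g x (t *: z)%R <= (t * P)%:E)%E.
Proof.
move=> t0 H; apply: clarke_le => e e0.
have et : 0 < e / t by rewrite divr_gt0.
have [d1 d10 Hd1] := clarke_near H et.
set d := minr d1 (d1 / t).
have d0 : 0 < d by rewrite lt_min d10 divr_gt0.
have h1 : d <= d1 by rewrite ge_min lexx.
have h2 : d <= d1 / t by rewrite ge_min lexx orbT.
have h3 : d * t <= d1 by rewrite -ler_pdivlMr.
exists d => // y l yx /andP[l0 ld].
have -> : dq g y (t *: z) l = t * dq g y z (t * l).
  rewrite /dq scalerA [l * t]mulrC; field; by rewrite !lt0r_neq0.
have A1 : dq g y z (t * l) < P + e / t.
  apply: Hd1; first exact: (lt_le_trans yx h1).
  rewrite mulr_gt0 //=; nra.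
have -> : t * P + e = t * (P + e / t) by field; exact: lt0r_neq0.
by apply: ltW; rewrite ltr_pM2l.
Qed.

Lemma clarke_real {Y} (g : Y -> R) x : loc_lipschitz g ->
  exists2 L, 0 <= L & forall v, clarke_dd g x v = (fine (clarke_dd g x v))%:E /\
     `|fine (clarke_dd g x v)| <= L * `|v|.
Proof.
move=> /(clarke_fin x) [L L0 HL]; exists L => // v; have [lo hi] := HL v.
move: lo hi; case: (clarke_dd g x v) => [r| |] //= lo hi.
by split => //; rewrite ler_norml -!lee_fin lo hi.
Qed.
Lemma pos_min4 (a b c d : R) : 0 < a -> 0 < b -> 0 < c -> 0 < d ->
  exists2 m, 0 < m & [/\ m <= a, m <= b, m <= c & m <= d].
Proof.
move=> a0 b0 c0 d0; exists (minr (minr a b) (minr c d)).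
  by rewrite !lt_min a0 b0 c0 d0.
by rewrite !ge_min !lexx !orbT.
Qed.

Lemma lincont_of_bound {Y} (eta : Y -> R) (L : R) :
  (forall x y, eta (x - y) = eta x - eta y) ->
  (forall z, `|eta z| <= L * `|z|) -> continuous eta.
Proof.
move=> hB hL x; apply/cvgrPdist_lt => eps eps0; apply/nbhs_normP.
have L1 : 0 < `|L| + 1 by rewrite ltr_wpDl.
exists (eps / (`|L| + 1)); first by rewrite /= divr_gt0.
move=> y /= xy; rewrite -hB; apply: (le_lt_trans (hL _)).
apply: (le_lt_trans (ler_wpM2r (normr_ge0 _) (ler_norm L))).
apply: (le_lt_trans (ler_wpM2r (normr_ge0 _) (_ : `|L| <= `|L| + 1))); first lra.
by rewrite mulrC -ltr_pdivlMr.
Qed.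

Lemma loclip_cont_line {Y} (F : Y -> R) (v d : Y) (a b : R) : loc_lipschitz F ->
  continuous (fun s : R => F (v + s *: d) - (s * a + b)).
Proof.
move=> hF s0; apply/cvgrPdist_lt => eps eps0; apply/nbhs_normP.
have [r r0 [L HL]] := hF (v + s0 *: d).
have d1 : 0 < `|d| + 1 by rewrite ltr_wpDl.
have L1 : 0 < `|L| * `|d| + `|a| + 1 by rewrite ltr_wpDl // addr_ge0 // mulr_ge0.
have [m m0 [m1 m2 _ _]] := pos_min4 (divr_gt0 r0 d1) (divr_gt0 eps0 L1) ltr01 ltr01.
have hmr : m * (`|d| + 1) <= r by rewrite -ler_pdivlMr.
have hm : m * (`|L| * `|d| + `|a| + 1) <= eps by rewrite -ler_pdivlMr.
exists m; first by [].
move=> s /= hs.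
have e1 : forall t, `|t - s0| < m -> `|v + t *: d - (v + s0 *: d)| < r.
  move=> t ht; rewrite addKB -scalerBl normrZ.
  apply: (le_lt_trans (ler_wpM2r (normr_ge0 d) (ltW ht))).
  by apply: (lt_le_trans _ hmr); rewrite ltr_pM2l // ltrDl.
have hs' : `|s - s0| < m by rewrite distrC.
have := HL _ _ (e1 s0 _) (e1 s hs'); rewrite subrr normr0 => /(_ m0).
rewrite addKB -scalerBl normrZ => H.
have -> : F (v + s0 *: d) - (s0 * a + b) - (F (v + s *: d) - (s * a + b)) =
   (F (v + s0 *: d) - F (v + s *: d)) + (s - s0) * a by ring.
apply: (le_lt_trans (ler_normD _ _)); rewrite normrM.
have k1 : L * (`|s0 - s| * `|d|) <= `|L| * (m * `|d|).
  apply: (le_trans (ler_wpM2r (mulr_ge0 (normr_ge0 _) (normr_ge0 _)) (ler_norm L))).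
  apply: ler_wpM2l => //; apply: ler_wpM2r => //; exact: ltW.
have k2 : `|s - s0| * `|a| <= m * `|a| by apply: ler_wpM2r => //; exact: ltW.
lra.
Qed.
Section Lag.
Variables V X : normedModType R.
Variable gamma : V -> X.
Variable A : V -> V -> R.
Variable J : X -> X -> R.
Variable f : V -> R.
Hypothesis hg : is_linear gamma.
Hypothesis cg : continuous gamma.
Hypothesis hf : dual_elt f.
Hypothesis hAd : forall u, dual_elt (A u).
Hypothesis hA1 : forall (a : R) (u1 u2 v : V), A (a *: u1 + u2) v = a * A u1 v + A u2 v.
Hypothesis hAb : exists C : R, forall u, dual_norm (A u) <= C * `|u|.
Hypothesis hAs : forall u v, A u v = A v u.
Hypothesis hJ : forall w, loc_lipschitz (J w).

Lemma A2D u x y : A u (x + y) = A u x + A u y.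
Proof. by rewrite -(scale1r x) (proj1 (hAd u)) mul1r scale1r. Qed.
Lemma A2Z u a x : A u (a *: x) = a * A u x.
Proof. by rewrite -(addr0 (a *: x)) (proj1 (hAd u)) (lin0 (dual_lin (hAd u))) addr0. Qed.
Lemma A1D u1 u2 x : A (u1 + u2) x = A u1 x + A u2 x.
Proof. by rewrite -(scale1r u1) hA1 mul1r scale1r. Qed.
Lemma A1Z a u x : A (a *: u) x = a * A u x.
Proof. by rewrite hAs A2Z hAs. Qed.
Lemma A1B u1 u2 x : A (u1 - u2) x = A u1 x - A u2 x.
Proof. by rewrite A1D -scaleN1r A1Z mulN1r. Qed.
Lemma A2B u x y : A u (x - y) = A u x - A u y.
Proof. by rewrite hAs A1B !(hAs _ u). Qed.

Lemma Aquad y u l : A (y + l *: u) (y + l *: u) = A y y + 2 * l * A y u + l ^+ 2 * A u u.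
Proof. rewrite !A1D !A2D !A1Z !A2Z (hAs u y); ring. Qed.

Lemma Adiff y z : A y y - A z z = A (y - z) (y + z).
Proof. rewrite A1B !A2D (hAs z y); ring. Qed.

Lemma A_bound : exists2 C, 0 <= C & forall u x, `|A u x| <= C * `|u| * `|x|.
Proof.
have [C HC] := hAb; exists `|C| => // u x.
apply: (le_trans (dual_normP (hAd u) x)); apply: ler_wpM2r => //.
apply: (le_trans (HC u)); apply: ler_wpM2r => //; exact: ler_norm.
Qed.

Lemma part1 w : loc_lipschitz (Lag_fun A f gamma J w).
Proof.
move=> x.
have [Bg Bg0 HBg] := lin_bounded hg cg.
have [Bf Bf0 HBf] := dual_bounded hf.
have [CA CA0 HCA] := A_bound.
have [r1 r10 [L1 HL1]] := hJ (gamma w) (gamma x).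
exists (r1 / Bg); first by rewrite divr_gt0.
exists (CA * (`|x| + r1 / Bg) + Bf + `|L1| * Bg) => y z yx zx.
have gy : forall y, `|y - x| < r1 / Bg -> `|gamma y - gamma x| < r1.
  move=> y' hy; rewrite -(linB hg); apply: (le_lt_trans (HBg _)).
  by rewrite mulrC -ltr_pdivlMr.
rewrite /Lag_fun.
have -> : 2^-1 * A y y - f y + J (gamma w) (gamma y) -
    (2^-1 * A z z - f z + J (gamma w) (gamma z)) =
    2^-1 * (A y y - A z z) - (f y - f z) + (J (gamma w) (gamma y) - J (gamma w) (gamma z)).
  by ring.
rewrite Adiff -(linB (dual_lin hf)).
have k1 : `|2^-1 * A (y - z) (y + z)| <= CA * (`|x| + r1 / Bg) * `|y - z|.
  rewrite normrM ger0_norm ?invr_ge0 ?ler0n //.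
  have := HCA (y - z) (y + z).
  have hyz : `|y + z| <= 2 * (`|x| + r1 / Bg).
    have ny : `|y| <= `|y - x| + `|x| by rewrite -{1}(subrK x y) ler_normD.
    have nz : `|z| <= `|z - x| + `|x| by rewrite -{1}(subrK x z) ler_normD.
    have := ler_normD y z; lra.
  have : CA * `|y - z| * `|y + z| <= CA * `|y - z| * (2 * (`|x| + r1 / Bg)).
    by apply: ler_wpM2l => //; rewrite mulr_ge0.
  have : 0 <= CA * `|y - z| by rewrite mulr_ge0.
  lra.
have k2 : `|f (y - z)| <= Bf * `|y - z| := HBf _.
have k3 : `|J (gamma w) (gamma y) - J (gamma w) (gamma z)| <= `|L1| * Bg * `|y - z|.
  apply: (le_trans (HL1 _ _ (gy y yx) (gy z zx))).
  rewrite -(linB hg) -mulrA; apply: (le_trans (ler_wpM2r (normr_ge0 _) (ler_norm L1))).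
  by apply: ler_wpM2l => //; exact: HBg.
apply: (le_trans (ler_normD _ _)); apply: (le_trans (lerD (ler_normB _ _) (lexx _))).
lra.
Qed.
Lemma dualD {Y} (xi : Y -> R) : dual_elt xi -> forall x y, xi (x + y) = xi x + xi y.
Proof. by move=> [h _] x y; rewrite -(scale1r x) h mul1r scale1r. Qed.
Lemma dualZ {Y} (xi : Y -> R) : dual_elt xi -> forall a x, xi (a *: x) = a * xi x.
Proof.
move=> hx a x; rewrite -(addr0 (a *: x)) (proj1 hx) (lin0 (dual_lin hx)) addr0 //.
Qed.
Lemma dual0 {Y} (xi : Y -> R) : dual_elt xi -> xi 0 = 0.
Proof. by move=> hx; exact: (lin0 (dual_lin hx)). Qed.

Lemma part2 w v xi : clarke_subdiff (Lag_fun A f gamma J w) v xi ->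
  exists2 eta, clarke_subdiff (J (gamma w)) (gamma v) eta &
    forall u, xi u = A v u - f u + eta (gamma u).
Proof.
case=> hxi hxile.
set j := J (gamma w); set x0 := gamma v.
have [L L0 HL] := clarke_real x0 (hJ (gamma w)).
set pc := fun z => fine (clarke_dd j x0 z).
have pcE : forall z, clarke_dd j x0 z = (pc z)%:E := fun z => (HL z).1.
have pcL : forall z, `|pc z| <= L * `|z| := fun z => (HL z).2.
have padd : forall a b, pc (a + b) <= pc a + pc b.
  by move=> a b; rewrite -lee_fin -pcE; apply: clarke_add; rewrite pcE.
have phom_le : forall t z, 0 < t -> pc (t *: z) <= t * pc z.
  by move=> t z t0; rewrite -lee_fin -pcE; apply: clarke_hom => //; rewrite pcE.
have phom : forall t z, 0 < t -> pc (t *: z) = t * pc z.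
  move=> t z t0; apply/le_anti; rewrite phom_le //=.
  have := phom_le t^-1 (t *: z); rewrite invr_gt0 scalerA mulVf ?gt_eqF // scale1r.
  move=> /(_ t0) H; have := ler_wpM2l (ltW t0) H.
  by rewrite mulrA mulfV ?gt_eqF // mul1r.
have [Bg Bg0 HBg] := lin_bounded hg cg.
have [CA CA0 HCA] := A_bound.
have step2 : forall u, xi u <= A v u - f u + pc (gamma u).
  move=> u; rewrite -lee_fin; apply: (le_trans (hxile u)).
  apply: clarke_le => e e0.
  have e2 : 0 < e / 2 by rewrite divr_gt0.
  have Hc : (clarke_dd j x0 (gamma u) <= (pc (gamma u))%:E)%E by rewrite pcE.
  have [d1 d10 Hd1] := clarke_near Hc e2.
  have c1 : 0 < CA * `|u| + 1 by rewrite ltr_wpDl // mulr_ge0.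
  have c2 : 0 < `|A u u| + 1 by rewrite ltr_wpDl.
  have [m m0 [m1 m2 m3 m4]] := pos_min4 d10 (divr_gt0 d10 Bg0)
     (divr_gt0 e0 (mulr_gt0 (ltr0n _ 4) c1)) (divr_gt0 e0 (mulr_gt0 (ltr0n _ 4) c2)).
  exists m => // y l yv /andP[l0 lm].
  have -> : dq (Lag_fun A f gamma J w) y u l =
      (A y u + l / 2 * A u u) - f u + dq j (gamma y) (gamma u) l.
    rewrite /dq /Lag_fun Aquad (linD hg) (linZ hg) (dualD hf) (dualZ hf).
    rewrite /j; field; exact: lt0r_neq0.
  have k1 : dq j (gamma y) (gamma u) l < pc (gamma u) + e / 2.
    apply: Hd1; last by rewrite l0 (lt_le_trans lm m1).
    rewrite /x0 -(linB hg); apply: (le_lt_trans (HBg _)).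
    by rewrite mulrC -ltr_pdivlMr //; apply: (lt_le_trans yv m2).
  have k2 : A y u <= A v u + e / 4.
    have -> : A y u = A v u + A (y - v) u by rewrite A1B; ring.
    apply: lerD => //; apply: (le_trans (ler_norm _)); apply: (le_trans (HCA _ _)).
    have : CA * `|y - v| <= CA * m by apply: ler_wpM2l => //; exact: ltW.
    have hm3 : m * (4 * (CA * `|u| + 1)) <= e by rewrite -ler_pdivlMr // mulr_gt0.
    move=> H; have := ler_wpM2r (normr_ge0 u) H.
    have : 0 <= CA * `|u| by rewrite mulr_ge0.
    have : 0 <= m by exact: ltW.
    move=> hm0 hcu H2; nra.
  have k3 : l / 2 * A u u <= e / 4.
    have hm4 : m * (4 * (`|A u u| + 1)) <= e by rewrite -ler_pdivlMr // mulr_gt0.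
    have : A u u <= `|A u u| := ler_norm _.
    have : 0 <= `|A u u| by [].
    move=> h0 h1; nra.
  lra.
pose zeta u := xi u - A v u + f u.
pose G0 := [set z | exists u, z = (gamma u, zeta u)].
have pc0 : pc 0 = 0.
  by apply/eqP; rewrite -normr_eq0 eq_le normr_ge0 andbT; have := pcL 0; rewrite normr0 mulr0.
have zetaB : forall u1 u2, zeta (u1 - u2) = zeta u1 - zeta u2.
  move=> u1 u2; rewrite /zeta.
  rewrite -!(scaleN1r u2) !(dualD hxi) !(dualD hf) !(A2D) !(dualZ hxi) !(dualZ hf) !A2Z; ring.
have hG0 : PB pc G0.
  split.
  - exists 0; rewrite (lin0 hg) /zeta (dual0 hxi) (dual0 hf) (dual0 (hAd v)).
    by congr (_, _); ring.
  - move=> a x r y s [u1 [-> ->]] [u2 [-> ->]]; exists (a *: u1 + u2).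
    rewrite hg /zeta (proj1 hxi) (proj1 hf) (proj1 (hAd v)); congr (_, _); ring.
  - move=> x r s [u1 [-> ->]] [u2 [e ->]].
    have h1 := step2 (u1 - u2); have h2 := step2 (u2 - u1).
    rewrite !(linB hg) e subrr pc0 in h1 h2.
    have : zeta (u1 - u2) <= 0 by rewrite /zeta; lra.
    have : zeta (u2 - u1) <= 0 by rewrite /zeta; lra.
    rewrite !zetaB; lra.
  - by move=> x r [u [-> ->]]; have := step2 u; rewrite /zeta; lra.
have [eta [elin ele eext]] := hahn_banach padd phom hG0.
have eta0 : eta 0 = 0.
  have := elin 1 0 0; rewrite scale1r addr0 mul1r => /(congr1 (fun t => t - eta 0)).
  by rewrite subrr addrK.
have etaN : forall z, eta (- z) = - eta z.
  by move=> z; have := elin (-1) z 0; rewrite addr0 eta0 addr0 scaleN1r mulN1r.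
exists eta.
  split.
    split; first by move=> a x y; exact: elin.
    apply: (lincont_of_bound (L:=L)).
      by move=> x y; rewrite -scaleN1r addrC elin mulN1r addrC.
    move=> z; rewrite ler_norml; apply/andP; split.
      have := ele (- z); rewrite etaN; have := pcL (- z); rewrite normrN ler_norml.
      case/andP => _ h1 h2; lra.
    have := ele z; have := pcL z; rewrite ler_norml; case/andP => _ h1 h2; lra.
  by move=> z; rewrite pcE lee_fin.
move=> u; have := eext (gamma u) (zeta u) (ex_intro _ u erefl).
rewrite /zeta => ->; ring.
Qed.
Variables (m_A m_alpha m_L : R).
Hypothesis hmA : 0 < m_A.
Hypothesis hAc : forall u, m_A * `|u| ^+ 2 <= A u u.
Hypothesis hma : 0 <= m_alpha.
Hypothesis hmL : 0 <= m_L.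
Hypothesis hJ3 : forall w1 w2 v1 v2 : X,
     (clarke_dd (J w1) v1 (v2 - v1)%R + clarke_dd (J w2) v2 (v1 - v2)%R
      <= (m_alpha * `|v1 - v2| ^+ 2 + m_L * `|w1 - w2| * `|v1 - v2|)%R%:E)%E.
Hypothesis hS : m_A > (m_alpha + m_L) * op_norm gamma ^+ 2.

Lemma part3 w : strictly_convex (Lag_fun A f gamma J w).
Proof.
move=> u v t uv /andP[t0 t1].
set d := u - v.
have d0 : d != 0 by rewrite subr_eq0; apply/eqP.
set z := gamma d.
set h := fun s => Lag_fun A f gamma J w (v + s *: d).
have -> : t *: u + (1 - t) *: v = v + t *: d.
  by rewrite /d scalerBl scale1r scalerBr addrCA addrC.
have -> : Lag_fun A f gamma J w u = h 1 by rewrite /h scale1r /d addrC subrK.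
have -> : Lag_fun A f gamma J w v = h 0 by rewrite /h scale0r addr0.
rewrite -/(h t) ltNge; apply/negP => Hneg.
pose th s := h s - (s * (h 1 - h 0) + h 0).
have cth : continuous th := loclip_cont_line (v:=v) (d:=d) (a:=h 1 - h 0) (b:=h 0) (part1 w).
have th0 : th 0 = 0 by rewrite /th mul0r add0r subrr.
have th1 : th 1 = 0 by rewrite /th mul1r subrK subrr.
have tht : 0 <= th t by rewrite /th; lra.
have [c /andP[c0 c1] cmax] : exists2 c, 0 < c < 1 & forall s, 0 <= s <= 1 -> th s <= th c.
  have [c' c'in Hc'] := EVT_max (@ler01 R) (continuous_subspaceT cth).
  have Hm : forall s, 0 <= s <= 1 -> th s <= th c'.
    by move=> s hs; apply: Hc'; rewrite in_itv /=.
  move: c'in; rewrite in_itv /= => /andP[c'0 c'1].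
  have [/andP[c'0' c'1']|nc] := boolP ((0 < c') && (c' < 1)).
    by exists c' => //; rewrite c'0' c'1'.
  have thc' : th c' = 0.
    move: nc; rewrite negb_and -!leNgt => /orP[h1|h1].
      by have -> : c' = 0 by apply/le_anti; rewrite h1 c'0.
    by have -> : c' = 1 by apply/le_anti; rewrite h1 c'1.
  exists t; first by rewrite t0 t1.
  move=> s hs; apply: (le_trans (Hm s hs)); lra.
have [a /andP[a0 ac] amin] : exists2 a, 0 <= a < c & forall s, 0 <= s <= c -> th a <= th s.
  have [a' a'in Ha'] := EVT_min (ltW c0) (continuous_subspaceT cth).
  have Hm : forall s, 0 <= s <= c -> th a' <= th s.
    by move=> s hs; apply: Ha'; rewrite in_itv /=.
  move: a'in; rewrite in_itv /= => /andP[a'0 a'c].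
  have [a'c'|na] := boolP (a' < c).
    by exists a' => //; rewrite a'0 a'c'.
  have ea : a' = c by apply/le_anti; rewrite a'c /= leNgt.
  exists 0; first by rewrite lexx c0.
  move=> s hs; apply: (le_trans _ (Hm s hs)); rewrite th0 ea.
  have := cmax t; rewrite (ltW t0) (ltW t1) => /(_ isT); lra.
set D := c - a.
have D0 : 0 < D by rewrite /D subr_gt0.
have gx : forall s, gamma (v + s *: d) = gamma v + s *: z.
  by move=> s; rewrite (linD hg) (linZ hg).
pose G s := J (gamma w) (gamma v + s *: z).
pose x_ s := v + s *: d.
pose ka := f d + (h 1 - h 0).
have hstep : forall s l, th (s + l) - th s =
    l * A (x_ s) d + l ^+ 2 / 2 * A d d - l * ka + (G (s + l) - G s).
  move=> s l; rewrite /th /ka /h /Lag_fun /G /x_ -!gx.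
  have -> : v + (s + l) *: d = (v + s *: d) + l *: d by rewrite scalerDl addrA.
  rewrite (Aquad (v + s *: d) d l) (dualD hf (v + s *: d) (l *: d)) (dualZ hf l d).
  lra.
have amin' : forall l, 0 < l -> l <= D -> th a <= th (a + l).
  move=> l l0 lD; apply: amin; apply/andP; split; first by rewrite addr_ge0 // ltW.
  by move: lD; rewrite /D; lra.
have cmax' : forall l, 0 < l -> l <= 1 - c -> th (c + l) <= th c.
  move=> l l0 lc; apply: cmax; apply/andP; split; first by rewrite addr_ge0 // ltW.
  by move: lc; lra.
have opn0 := op_norm_ge0 hg cg.
have hz : `|z| <= op_norm gamma * `|d| := op_normP hg cg d.
have nd : 0 < `|d| by rewrite normr_gt0.
have gap : m_alpha * `|z| ^+ 2 < A d d.
  have hz2 : `|z| ^+ 2 <= (op_norm gamma * `|d|) ^+ 2.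
    by rewrite !expr2; apply: ler_pM.
  have k1 := ler_wpM2l hma hz2.
  have k2 : (m_alpha + m_L) * op_norm gamma ^+ 2 * `|d| ^+ 2 < m_A * `|d| ^+ 2.
    by rewrite ltr_pM2r // exprn_gt0.
  have k3 : 0 <= m_L * op_norm gamma ^+ 2 * `|d| ^+ 2 by rewrite !mulr_ge0 // exprn_ge0.
  have k4 := hAc d.
  rewrite exprMn in k1.
  lra.
have Add0 : 0 <= A d d.
  apply: le_trans (ltW gap); rewrite mulr_ge0 // exprn_ge0.
set e := D ^+ 2 * (A d d - m_alpha * `|z| ^+ 2) / 2.
have e0 : 0 < e by rewrite /e divr_gt0 // mulr_gt0 ?exprn_gt0 // subr_gt0.
have la : (((ka - A (x_ a) d) * D - e)%:E <=
    clarke_dd (J (gamma w)) (gamma v + a *: z)%R (D *: z)%R)%E.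
  apply: clarke_ge => del del0.
  have c3 : 0 < D ^+ 2 * (`|A d d| + 1) by rewrite mulr_gt0 ?exprn_gt0 // ltr_wpDl.
  have [mu mu0 [mu1 mu2 mu3 _]] := pos_min4 (divr_gt0 del0 (ltr0n _ 2)) ltr01
      (divr_gt0 e0 c3) ltr01.
  exists (gamma v + a *: z), mu; split; first by rewrite subrr normr0.
  have mud : mu < del by apply: (le_lt_trans mu1); rewrite ltr_pdivrMr // ltr_pMr // ltr1n.
  split; first by rewrite mu0 mud.
  have -> : dq (J (gamma w)) (gamma v + a *: z) (D *: z) mu = (G (a + mu * D) - G a) / mu.
    by rewrite /dq /G scalerA -addrA -scalerDl.
  have muD : mu * D <= D by rewrite ler_piMl // ltW.
  have H1 := hstep a (mu * D); have H2 := amin' _ (mulr_gt0 mu0 D0) muD.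
  rewrite ler_pdivlMr //.
  have hq0 : mu * (D ^+ 2 * (`|A d d| + 1)) <= e by rewrite -ler_pdivlMr.
  have hq1 : mu * (D ^+ 2 * A d d) <= mu * (D ^+ 2 * (`|A d d| + 1)).
    apply: ler_wpM2l; first exact: ltW.
    apply: ler_wpM2l; first by rewrite exprn_ge0 // ltW.
    by rewrite ger0_norm // lerDl.
  have hq : mu * (mu * (D ^+ 2 * A d d)) <= mu * e.
    by apply: ler_wpM2l; [exact: ltW | lra].
  have hme : 0 <= mu * e by rewrite mulr_ge0 // ltW.
  have E1 : (mu * D) ^+ 2 / 2 * A d d = mu * (mu * (D ^+ 2 * A d d)) / 2.
    by rewrite exprMn; ring.
  lra.
have lc : (((A (x_ c) d - ka) * D)%:E <=
    clarke_dd (J (gamma w)) (gamma v + c *: z)%R ((- D) *: z)%R)%E.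
  apply: clarke_ge => del del0.
  have cc2 : 0 < 2 * (D * `|z| + 1) by rewrite mulr_gt0 // ltr_wpDl // mulr_ge0 // ltW.
  have cc1 : 0 < (1 - c) / D by rewrite divr_gt0 // subr_gt0.
  have [mu mu0 [mu1 mu2 mu3 _]] := pos_min4 (divr_gt0 del0 (ltr0n _ 2)) cc1
      (divr_gt0 del0 cc2) ltr01.
  exists (gamma v + (c + mu * D) *: z), mu.
  have mud : mu < del by apply: (le_lt_trans mu1); rewrite ltr_pdivrMr // ltr_pMr // ltr1n.
  split.
    rewrite addKB -scalerBl.
    have -> : c + mu * D - c = mu * D by lra.
    rewrite normrZ gtr0_norm ?mulr_gt0 //.
    have hm3 : mu * (2 * (D * `|z| + 1)) <= del by rewrite -ler_pdivlMr.
    have : 0 <= mu * D * `|z| by rewrite !mulr_ge0 // ltW.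
    lra.
  split; first by rewrite mu0 mud.
  have -> : dq (J (gamma w)) (gamma v + (c + mu * D) *: z) ((- D) *: z) mu =
      (G c - G (c + mu * D)) / mu.
    rewrite /dq /G scalerA -addrA -scalerDl.
    by have -> : c + mu * D + mu * - D = c by ring.
  have muD : mu * D <= 1 - c by rewrite -ler_pdivlMr.
  have H1 := hstep c (mu * D); have H2 := cmax' _ (mulr_gt0 mu0 D0) muD.
  rewrite ler_pdivlMr //.
  have : 0 <= (mu * D) ^+ 2 / 2 * A d d by rewrite mulr_ge0 // divr_ge0 // exprn_ge0 // mulr_ge0 // ltW.
  lra.
have J3 := hJ3 (gamma w) (gamma w) (gamma v + a *: z) (gamma v + c *: z).
have dir1 : gamma v + c *: z - (gamma v + a *: z) = D *: z by rewrite addKB -scalerBl.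
have dir2 : gamma v + a *: z - (gamma v + c *: z) = (- D) *: z.
  by rewrite addKB -scalerBl /D opprB.
rewrite dir1 dir2 subrr normr0 mulr0 mul0r addr0 normrZ normrN gtr0_norm // in J3.
have := le_trans (leeD la lc) J3; rewrite -EFinD lee_fin.
have -> : A (x_ c) d = A (x_ a) d + D * A d d.
  have -> : x_ c = D *: d + x_ a by rewrite /x_ /D addrCA -scalerDl subrK.
  by rewrite hA1 addrC.
rewrite /e exprMn.
have : 0 < D ^+ 2 * (A d d - m_alpha * `|z| ^+ 2) by rewrite mulr_gt0 ?exprn_gt0 // subr_gt0.
lra.
Qed.
End Lag.
End Main.
Unset Implicit Arguments.

Theorem lemma2 (R : realType) (V X : completeNormedModType R)
  (gamma : V -> X) (A : V -> V -> R) (J : X -> X -> R) (f : V -> R)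
  (m_A c0 c1 c2 m_alpha m_L : R) :
  reflexive_space V ->
  (* gamma in L(V,X) *)
  is_linear gamma -> continuous gamma ->
  (* f in V^* *)
  dual_elt f ->
  (* (A1) A : V -> V^* linear and bounded *)
  (forall u, dual_elt (A u)) ->
  (forall (a : R) (u1 u2 v : V), A (a *: u1 + u2) v = a * A u1 v + A u2 v) ->
  (exists C : R, forall u, dual_norm (A u) <= C * `|u|) ->
  (* (A2) *)
  (forall u v, A u v = A v u) ->
  (* (A3) *)
  0 < m_A -> (forall u, A u u >= m_A * `|u| ^+ 2) ->
  (* (J1) *)
  (forall w, loc_lipschitz (J w)) ->
  (* (J2) *)
  0 <= c0 -> 0 <= c1 -> 0 <= c2 ->
  (forall w v xi, clarke_subdiff (J w) v xi ->
     dual_norm xi <= c0 + c1 * `|v| + c2 * `|w|) ->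
  (* (J3) *)
  0 <= m_alpha -> 0 <= m_L ->
  (forall w1 w2 v1 v2 : X,
     (clarke_dd (J w1) v1 (v2 - v1)%R + clarke_dd (J w2) v2 (v1 - v2)%R
      <= (m_alpha * `|v1 - v2| ^+ 2 + m_L * `|w1 - w2| * `|v1 - v2|)%R%:E)%E) ->
  (* (S) *)
  m_A > (m_alpha + m_L) * op_norm gamma ^+ 2 ->
  (* (i) *)
  (forall w, loc_lipschitz (Lag_fun A f gamma J w)) /\
  (* (ii) *)
  (forall w v xi, clarke_subdiff (Lag_fun A f gamma J w) v xi ->
     exists2 eta, clarke_subdiff (J (gamma w)) (gamma v) eta &
       forall u, xi u = A v u - f u + eta (gamma u)) /\
  (* (iii) *)
  (forall w, strictly_convex (Lag_fun A f gamma J w)).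
Proof.
move=> _ hg cg hf hAd hA1 hAb hAs hmA hAc hJ _ _ _ _ hma hmL hJ3 hS.
split; [|split].
- move=> w; exact: (part1 hg cg hf hAd hA1 hAb hAs hJ w).
- move=> w v xi hxi; exact: (part2 hg cg hf hAd hA1 hAb hAs hJ hxi).
- move=> w; exact: (part3 hg cg hf hAd hA1 hAb hAs hJ hAc hma hmL hJ3 hS w).
Qed.
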